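(* Let $x_1,\dots,x_N$ be training data points, let $f(x,\theta)$ be a loss function differentiable in $\theta$, and fix $\theta_t$. Let $S_b\subseteq\{x_1,\dots,x_N\}$ be a random bucket, and conditionally on $S_b$ let $x_m$ be chosen uniformly at random from $S_b$. Let $p_i=\Pr(x_i\in S_b)>0$ and let $\mathbb{P}(x_i,x_j\in S_b)$ denote the probability that both $x_i$ and $x_j$ belong to $S_b$. For the estimator $$\mathrm{Est} = \frac{1}{N}\sum_{i=1}^N \mathbb{1}_{x_i\in S_b}\,\mathbb{1}_{(x_i = x_m \mid x_i\in S_b)}\,\frac{\nabla f(x_i,\theta_t)\cdot |S_b|}{p_i},$$ the trace of its covariance matrix $\Sigma(\mathrm{Est})$ equals $$\mathrm{Tr}(\Sigma(\mathrm{Est})) = \frac{1}{N^2}\sum_{i=1}^N \frac{\|\nabla f(x_i,\theta_t)\|_2^2\cdot \sum_{j=1}^N \frac{\mathbb{P}(x_i,x_j\in S_b)}{p_i}}{p_i} - \frac{1}{N^2}\Big\|\sum_{i=1}^N \nabla f(x_i,\theta_t)\Big\|_2^2.$$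
   Context: This is the LSH-sampled gradient estimator (LGD). Data points are preprocessed into locality-sensitive hash tables; at iteration $t$ the query (built from $\theta_t$) is hashed, a hash table is probed, and the matching non-empty bucket is $S_b$. The paper writes $p_i = cp(x_i,\theta_t)^K(1-cp(x_i,\theta_t)^K)^{l-1}$, with $cp$ the LSH collision probability, $K$ the number of concatenated hashes and $l$ the number of tables probed; in the statement $p_i$ denotes $\Pr(x_i\in S_b)$. $\mathbb{1}_{(x_i = x_m\mid x_i\in S_b)}$ is the indicator that $x_i$ is the element selected from the bucket. *)

(* Defs.v *)
From HB Require Import structures.
From mathcomp Require Import all_boot all_order all_algebra.
From mathcomp Require Import all_classical all_reals all_analysis.
Set Implicit Arguments. Unset Strict Implicit. Unset Printing Implicit Defensive.
Import Order.TTheory GRing.Theory Num.Theory.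
Import numFieldNormedType.Exports.
Local Open Scope ring_scope.

Definition grad (R : realType) (d : nat) (g : 'rV[R]_d -> R) (th : 'rV[R]_d)
  : 'rV[R]_d := \row_(k < d) derive g th (delta_mx 0 k).

Definition sqnorm (R : realType) (d : nat) (v : 'rV[R]_d) : R :=
  \sum_(k < d) v 0 k ^+ 2.

Definition pin (R : realType) (N : nat) (P : {set 'I_N} -> R) (i : 'I_N) : R :=
  \sum_(S : {set 'I_N} | i \in S) P S.

Definition pin2 (R : realType) (N : nat) (P : {set 'I_N} -> R) (i j : 'I_N) : R :=
  \sum_(S : {set 'I_N} | (i \in S) && (j \in S)) P S.

(* Joint law of (S_b, m): S_b ~ P, then m uniform on S_b. *)
Definition joint (R : realType) (N : nat) (P : {set 'I_N} -> R)
  (w : {set 'I_N} * 'I_N) : R :=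
  P w.1 * ((w.2 \in w.1)%:R / (#|w.1|)%:R).

Definition Est (R : realType) (N d : nat) (P : {set 'I_N} -> R)
  (g : 'I_N -> 'rV[R]_d) (w : {set 'I_N} * 'I_N) : 'rV[R]_d :=
  (N%:R)^-1 *: \sum_(i < N)
     (((i \in w.1)%:R * (i == w.2)%:R * (#|w.1|)%:R / pin P i) *: g i).

Definition Evec (R : realType) (N d : nat) (P : {set 'I_N} -> R)
  (Y : {set 'I_N} * 'I_N -> 'rV[R]_d) : 'rV[R]_d :=
  \sum_(w : {set 'I_N} * 'I_N) joint P w *: Y w.

Definition Cov (R : realType) (N d : nat) (P : {set 'I_N} -> R)
  (Y : {set 'I_N} * 'I_N -> 'rV[R]_d) : 'M[R]_d :=
  \sum_(w : {set 'I_N} * 'I_N)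
     joint P w *: ((Y w - Evec P Y)^T *m (Y w - Evec P Y)).

(* Main.v *)
Require Import Defs.
From HB Require Import structures.
From mathcomp Require Import all_boot all_order all_algebra.
From mathcomp Require Import all_classical all_reals all_analysis.
From mathcomp Require Import ring lra.
Import Order.TTheory GRing.Theory Num.Theory.
Import numFieldNormedType.Exports.
Local Open Scope ring_scope.

Section H.
Variables (R : realType) (N d : nat) (P : {set 'I_N} -> R).

Lemma joint_sum (F : {set 'I_N} * 'I_N -> R) :
  \sum_w joint P w * F w =
  \sum_(S : {set 'I_N}) \sum_(m < N) P S * ((m \in S)%:R / (#|S|)%:R) * F (S, m).
Proof. by rewrite pair_big /=; apply: eq_bigr => -[S m] _. Qed.

Lemma cardR (S : {set 'I_N}) : (#|S|)%:R = \sum_(m < N) (m \in S)%:R :> R.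
Proof.
rewrite -sum1_card natr_sum big_mkcond /=; apply: eq_bigr => m _.
by case: (m \in S).
Qed.

Lemma Est_eq (g : 'I_N -> 'rV[R]_d) S m :
  Est P g (S, m) = (N%:R^-1 * ((m \in S)%:R * (#|S|)%:R / pin P m)) *: g m.
Proof.
rewrite /Est (bigD1 m) //= big1 ?addr0.
  by rewrite eqxx mulr1 scalerA.
by move=> i /negbTE ->; rewrite mulr0 mul0r mul0r scale0r.
Qed.

Lemma var_id (I : finType) (j y : I -> R) : \sum_i j i = 1 ->
  \sum_i j i * (y i - \sum_l j l * y l) ^+ 2 =
  \sum_i j i * y i ^+ 2 - (\sum_i j i * y i) ^+ 2.
Proof.
move=> hj; set e := \sum_l j l * y l.
have E i : j i * (y i - e) ^+ 2 =
   j i * y i ^+ 2 - (2 * e) * (j i * y i) + e ^+ 2 * j i by ring.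
under eq_bigr do rewrite E.
rewrite big_split /= sumrB -!mulr_sumr hj -/e; ring.
Qed.

End H.

Theorem theorem2 (R : realType) (N d : nat) (X : Type) (x : 'I_N -> X)
  (f : X -> 'rV[R]_d -> R) (th : 'rV[R]_d)
  (P : {set 'I_N} -> R)
  (hdiff : forall i, differentiable (f (x i)) th)
  (hP0 : forall S, 0 <= P S)
  (hP1 : \sum_(S : {set 'I_N}) P S = 1)
  (hnonempty : P finset.set0 = 0)
  (hp : forall i, 0 < pin P i) :
  let g := fun i => grad (f (x i)) th in
  \tr (Cov P (Est P g)) =
    (N%:R ^+ 2)^-1 * \sum_(i < N)
        (sqnorm (g i) * (\sum_(j < N) pin2 P i j / pin P i)) / pin P i
    - (N%:R ^+ 2)^-1 * sqnorm (\sum_(i < N) g i).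
Proof.
move=> g; set Y := Est P g.
have hp0 m : pin P m != 0 by rewrite gt_eqF.
have cS (S : {set 'I_N}) m : m \in S -> (#|S|)%:R != 0 :> R.
  by move=> mS; rewrite pnatr_eq0 -lt0n card_gt0; apply/set0Pn; exists m.
have hpin m : \sum_(S : {set 'I_N}) (m \in S)%:R * P S = pin P m.
  rewrite /pin [RHS]big_mkcond /=; apply: eq_bigr => S _.
  by case: (m \in S); rewrite ?mul1r ?mul0r.
have hJ : \sum_w joint P w = 1.
  rewrite -hP1 (eq_bigr (fun w => joint P w * 1)); last by move=> w _; rewrite mulr1.
  rewrite joint_sum.
  apply: eq_bigr => S _.
  under eq_bigr do rewrite mulr1 mulrA.
  rewrite -mulr_suml -mulr_sumr -cardR.
  have [->|nz] := eqVneq S finset.set0; first by rewrite hnonempty !mul0r.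
  have : (#|S|)%:R != 0 :> R by rewrite pnatr_eq0 -lt0n card_gt0.
  by move=> h; rewrite mulfK.
have hE k : Evec P Y 0 k = N%:R^-1 * \sum_i g i 0 k.
  rewrite /Evec summxE.
  under eq_bigr do rewrite mxE.
  rewrite joint_sum.
  transitivity (\sum_(S : {set 'I_N}) \sum_(m < N)
      (m \in S)%:R * P S * (N%:R^-1 * g m 0 k / pin P m)).
    apply: eq_bigr => S _; apply: eq_bigr => m _.
    rewrite /Y Est_eq mxE.
    case mS: (m \in S); last by rewrite !(mul0r, mulr0).
    move: (cS S m mS) (hp0 m) (N%:R^-1 : R) => h1 h2 a; rewrite mul1r; by field; rewrite h1 h2.
  rewrite exchange_big mulr_sumr; apply: eq_bigr => m _.
  rewrite -mulr_suml hpin; move: (hp0 m) => h; move: (N%:R^-1 : R) => a; by field.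
have hM k : \sum_w joint P w * (Y w 0 k) ^+ 2 =
    \sum_(m < N) (N%:R^-1 * g m 0 k / pin P m) ^+ 2 * \sum_(j < N) pin2 P m j.
  rewrite joint_sum.
  transitivity (\sum_(S : {set 'I_N}) \sum_(m < N)
      (m \in S)%:R * P S * (#|S|)%:R * (N%:R^-1 * g m 0 k / pin P m) ^+ 2).
    apply: eq_bigr => S _; apply: eq_bigr => m _.
    rewrite /Y Est_eq mxE.
    case mS: (m \in S); last by rewrite !(mul0r, mulr0, expr0n).
    move: (cS S m mS) (hp0 m) (N%:R^-1 : R) => h1 h2 a; rewrite !mul1r; by field; rewrite h1 h2.
  rewrite exchange_big; apply: eq_bigr => m _.
  rewrite -mulr_suml mulrC; congr (_ * _).
  under eq_bigr do rewrite cardR mulr_sumr.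
  rewrite exchange_big; apply: eq_bigr => j _.
  rewrite /pin2 [RHS]big_mkcond /=; apply: eq_bigr => S _.
  by case: (m \in S); case: (j \in S); rewrite /= ?(mul1r, mul0r, mulr1, mulr0).
have hEv k : \sum_w joint P w * Y w 0 k = Evec P Y 0 k.
  by rewrite /Evec summxE; apply: eq_bigr => w _; rewrite [RHS]mxE.
have hT : \tr (Cov P Y) = \sum_(k < d)
    \sum_w joint P w * (Y w 0 k - \sum_w' joint P w' * Y w' 0 k) ^+ 2.
  rewrite /mxtrace /Cov; apply: eq_bigr => k _.
  rewrite summxE hEv; apply: eq_bigr => w _.
  by rewrite mxE mxE big_ord1 !mxE expr2.
rewrite hT.
under eq_bigr do rewrite var_id // hM.
have hE' k : \sum_w joint P w * Y w 0 k = N%:R^-1 * \sum_i g i 0 k.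
  by rewrite hEv hE.
under eq_bigr do rewrite hE'.
rewrite sumrB /sqnorm; congr (_ - _).
  rewrite exchange_big mulr_sumr; apply: eq_bigr => m _.
  have -> : \sum_(j < N) pin2 P m j / pin P m = (\sum_(j < N) pin2 P m j) / pin P m.
    by rewrite mulr_suml.
  set Q := \sum_(j < N) pin2 P m j.
  rewrite !mulr_suml mulr_sumr; apply: eq_bigr => k _.
  rewrite -exprVn -mulr_suml -/Q; ring.
rewrite mulr_sumr; apply: eq_bigr => k _.
by rewrite summxE exprMn exprVn.
Qed.
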